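(* For a function $\phi:[1]^m\to[1]^n$ the following are equivalent: (1) $\phi$ is a $\Delta_1[\tau,\gamma_+]^*$-morphism; (2) $\phi$ is an interval-preserving join-semilattice homomorphism.
   Context: $[1]=\{0<1\}$; $[1]^n$ is the $n$-fold product poset with componentwise order ($[1]^0=[0]$ a point), a Boolean lattice with meet $\min$ and join $\max$ componentwise. An interval in a poset is a non-empty subset $[x,z]=\{y:x\leq y\leq z\}$; a function is interval-preserving if it maps intervals onto intervals. A join-semilattice homomorphism preserves binary joins. Define $\tau:[1]^2\to[1]^2$, $\tau(x,y)=(y,x)$, and $\gamma_+:[1]^2\to[1]$, $\gamma_+(x,y)=\max(x,y)$. $\Delta_1[\tau,\gamma_+]^*$ denotes the smallest subcategory of $\mathbf{Set}$ containing all functions between $[0]$ and $[1]$, containing $\tau$ and $\gamma_+$, and closed under Cartesian products of functions; its objects are the $[1]^n$. *)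

(* Defs.v *)
From mathcomp Require Import all_boot.
Set Implicit Arguments. Unset Strict Implicit. Unset Printing Implicit Defensive.

(* [1]^n : the n-fold product of [1] = {0<1} = bool (false < true),
   represented as finite functions 'I_n -> bool. [1]^0 is a point. *)
Definition cube (n : nat) := {ffun 'I_n -> bool}.

Definition cle n (x y : cube n) : bool := [forall i, x i <= y i].
Definition cjoin n (x y : cube n) : cube n := [ffun i => x i || y i].

Definition monotone_cube m n (f : cube m -> cube n) : Prop :=
  forall x y, cle x y -> cle (f x) (f y).

Definition tau (x : cube 2) : cube 2 := [ffun i => x (rev_ord i)].
Definition gamma_plus (x : cube 2) : cube 1 :=
  [ffun _ => x (@Ordinal 2 0 isT) || x (@Ordinal 2 1 isT)].

(* Cartesian product of functions, with [1]^a x [1]^c identified with [1]^(a+c) *)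
Definition cube_left a c (x : cube (a + c)) : cube a := [ffun j => x (lshift c j)].
Definition cube_right a c (x : cube (a + c)) : cube c := [ffun j => x (rshift a j)].
Definition cube_pair b d (y : cube b) (z : cube d) : cube (b + d) :=
  [ffun i => match split i with inl j => y j | inr k => z k end].
Definition fprod a b c d (f : cube a -> cube b) (g : cube c -> cube d)
  : cube (a + c) -> cube (b + d) :=
  fun x => cube_pair (f (cube_left x)) (g (cube_right x)).

(* Delta_1[tau, gamma_+]^* : the smallest subcategory of Set containing all
   morphisms of Delta_1 (monotone maps between [0] and [1]), tau and gamma_+,
   closed under Cartesian products of functions.  Morphisms are functions,
   hence taken up to extensional equality. *)
Inductive DMor : forall m n, (cube m -> cube n) -> Prop :=
| DMor_base m n (f : cube m -> cube n) :
    m <= 1 -> n <= 1 -> monotone_cube f -> DMor f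
| DMor_tau : DMor tau
| DMor_gamma : DMor gamma_plus
| DMor_id n : DMor (fun x : cube n => x)
| DMor_comp m n p (f : cube m -> cube n) (g : cube n -> cube p) :
    DMor f -> DMor g -> DMor (fun x => g (f x))
| DMor_prod a b c d (f : cube a -> cube b) (g : cube c -> cube d) :
    DMor f -> DMor g -> DMor (fprod f g)
| DMor_ext m n (f g : cube m -> cube n) :
    DMor f -> (forall x, f x = g x) -> DMor g.

Definition in_interval n (x z y : cube n) : bool := cle x y && cle y z.

Definition interval_preserving m n (phi : cube m -> cube n) : Prop :=
  forall x z : cube m, cle x z ->
    exists a b : cube n, cle a b /\
      forall w : cube n,
        (exists y, in_interval x z y /\ phi y = w) <-> in_interval a b w.

Definition join_hom m n (phi : cube m -> cube n) : Prop :=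
  forall x y, phi (cjoin x y) = cjoin (phi x) (phi y).

(* Main.v *)
From Pilot Require Import Defs.
From mathcomp Require Import all_boot.
Import Pilot.Defs.
Set Implicit Arguments. Unset Strict Implicit. Unset Printing Implicit Defensive.

Lemma cleP n (x y : cube n) : reflect (forall i, x i -> y i) (cle x y).
Proof.
apply: (iffP forallP) => H i; first by move: (H i); case: (x i); case: (y i).
by move: (H i); case: (x i); case: (y i) => // ->.
Qed.

Lemma cle_refl n (x : cube n) : cle x x.
Proof. by apply/cleP. Qed.

Lemma cle_trans n (x y z : cube n) : cle x y -> cle y z -> cle x z.
Proof. by move=> /cleP H1 /cleP H2; apply/cleP => i /H1 /H2. Qed.

Lemma cle_anti n (x y : cube n) : cle x y -> cle y x -> x = y.
Proof.
move=> /cleP H1 /cleP H2; apply/ffunP => i.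
by case E: (x i); [rewrite (H1 _ E) | case E2: (y i) => //; rewrite -E (H2 _ E2)].
Qed.

Lemma left_lshift a c (x : cube (a + c)) j : cube_left x j = x (lshift c j).
Proof. by rewrite ffunE. Qed.
Lemma right_rshift a c (x : cube (a + c)) j : cube_right x j = x (rshift a j).
Proof. by rewrite ffunE. Qed.

Lemma pair_lshift b d (y : cube b) (z : cube d) j : cube_pair y z (lshift d j) = y j.
Proof. by rewrite ffunE (unsplitK (inl _ j)). Qed.
Lemma pair_rshift b d (y : cube b) (z : cube d) j : cube_pair y z (rshift b j) = z j.
Proof. by rewrite ffunE (unsplitK (inr _ j)). Qed.

Lemma left_pair b d (y : cube b) (z : cube d) : cube_left (cube_pair y z) = y.
Proof. by apply/ffunP => j; rewrite left_lshift pair_lshift. Qed.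
Lemma right_pair b d (y : cube b) (z : cube d) : cube_right (cube_pair y z) = z.
Proof. by apply/ffunP => j; rewrite right_rshift pair_rshift. Qed.

Lemma ord_split a c (i : 'I_(a + c)) :
  (exists j, i = lshift c j) \/ (exists k, i = rshift a k).
Proof.
case: (splitP i) => [j E|k E]; [left; exists j | right; exists k]; exact: val_inj.
Qed.

Lemma pair_lr a c (x : cube (a + c)) : cube_pair (cube_left x) (cube_right x) = x.
Proof.
apply/ffunP => i; case: (ord_split i) => [[j ->]|[k ->]].
  by rewrite pair_lshift left_lshift.
by rewrite pair_rshift right_rshift.
Qed.

Lemma cle_pair b d (y y' : cube b) (z z' : cube d) :
  cle (cube_pair y z) (cube_pair y' z') = cle y y' && cle z z'.
Proof.
apply/cleP/andP => [H|[/cleP H1 /cleP H2]].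
  split; apply/cleP => i.
    by move: (H (lshift d i)); rewrite !pair_lshift.
  by move: (H (rshift b i)); rewrite !pair_rshift.
move=> i; case: (ord_split i) => [[j ->]|[k ->]].
  by rewrite !pair_lshift; apply: H1.
by rewrite !pair_rshift; apply: H2.
Qed.

Lemma cle_lr a c (x y : cube (a + c)) :
  cle x y = cle (cube_left x) (cube_left y) && cle (cube_right x) (cube_right y).
Proof. by rewrite -cle_pair !pair_lr. Qed.

Lemma join_lr a c (x y : cube (a + c)) :
  cube_left (cjoin x y) = cjoin (cube_left x) (cube_left y) /\
  cube_right (cjoin x y) = cjoin (cube_right x) (cube_right y).
Proof. by split; apply/ffunP => j; rewrite !ffunE. Qed.

Lemma pair_join b d (y y' : cube b) (z z' : cube d) :
  cube_pair (cjoin y y') (cjoin z z') = cjoin (cube_pair y z) (cube_pair y' z').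
Proof.
apply/ffunP => i; case: (ord_split i) => [[j ->]|[k ->]].
  by rewrite pair_lshift [in RHS]ffunE !pair_lshift ffunE.
by rewrite pair_rshift [in RHS]ffunE !pair_rshift ffunE.
Qed.

Lemma IP_comp m n p (f : cube m -> cube n) (g : cube n -> cube p) :
  interval_preserving f -> interval_preserving g ->
  interval_preserving (fun x => g (f x)).
Proof.
move=> Hf Hg x z xz; have [a [b [ab Hab]]] := Hf x z xz.
have [a' [b' [ab' Hab']]] := Hg a b ab.
exists a', b'; split => // w; split.
  by move=> [y [Hy <-]]; apply/Hab'; exists (f y); split => //; apply/Hab; exists y.
by move=> /Hab' [u [/Hab [y [Hy <-]] <-]]; exists y.
Qed.

Lemma IP_prod a b c d (f : cube a -> cube b) (g : cube c -> cube d) :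
  interval_preserving f -> interval_preserving g ->
  interval_preserving (fprod f g).
Proof.
move=> Hf Hg x z; rewrite cle_lr => /andP [H1 H2].
have [a1 [b1 [ab1 E1]]] := Hf _ _ H1.
have [a2 [b2 [ab2 E2]]] := Hg _ _ H2.
exists (cube_pair a1 a2), (cube_pair b1 b2); split; first by rewrite cle_pair ab1.
move=> w; split.
  move=> [y [/andP [Hxy Hyz] <-]].
  move: Hxy Hyz; rewrite !cle_lr => /andP [Hl1 Hr1] /andP [Hl2 Hr2].
  have : in_interval a1 b1 (f (cube_left y)).
    by apply/E1; exists (cube_left y); rewrite /in_interval Hl1 Hl2.
  have : in_interval a2 b2 (g (cube_right y)).
    by apply/E2; exists (cube_right y); rewrite /in_interval Hr1 Hr2.
  rewrite /fprod /in_interval !cle_pair.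
  by move=> /andP [-> ->] /andP [-> ->].
rewrite /in_interval -(pair_lr w) !cle_pair.
move=> /andP [/andP [P1 P2] /andP [P3 P4]].
have [y1 [Hy1 Ey1]] : exists y, in_interval (cube_left x) (cube_left z) y /\ f y = cube_left w.
  by apply/E1; rewrite /in_interval P1 P3.
have [y2 [Hy2 Ey2]] : exists y, in_interval (cube_right x) (cube_right z) y /\ g y = cube_right w.
  by apply/E2; rewrite /in_interval P2 P4.
exists (cube_pair y1 y2); split.
  move: Hy1 Hy2 => /andP [Q1 Q2] /andP [Q3 Q4].
  by rewrite /in_interval -(pair_lr x) -(pair_lr z) !cle_pair Q1 Q2 Q3 Q4.
by rewrite /fprod left_pair right_pair Ey1 Ey2 pair_lr.
Qed.

Lemma JH_prod a b c d (f : cube a -> cube b) (g : cube c -> cube d) :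
  join_hom f -> join_hom g -> join_hom (fprod f g).
Proof.
move=> Hf Hg x y; rewrite /fprod; have [-> ->] := join_lr x y.
by rewrite Hf Hg pair_join.
Qed.

Lemma IP_small m n (f : cube m -> cube n) : n <= 1 -> interval_preserving f.
Proof.
move=> n1 x z xz.
pose P y := in_interval x z y.
have Px : P x by rewrite /P /in_interval cle_refl xz.
exists [ffun j => [forall y, P y ==> f y j]], [ffun j => [exists y, P y && f y j]].
split.
  apply/cleP => j; rewrite !ffunE => /forallP H; apply/existsP; exists x.
  by rewrite Px; move/implyP: (H x); apply.
move=> w; split.
  move=> [y [Py <-]]; apply/andP; split; apply/cleP => j; rewrite ffunE.
    by move=> /forallP /(_ y) /implyP; apply.
  by move=> fy; apply/existsP; exists y; apply/andP; split.
move=> /andP [/cleP Ha /cleP Hb].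
case: n n1 f w Ha Hb => [|[|//]] _ f w Ha Hb.
  by exists x; split => //; apply/ffunP => -[].
have Ew : forall v : cube 1, v ord0 = w ord0 -> v = w.
  by move=> v E; apply/ffunP => -[[|//] Hi]; rewrite (_ : Ordinal Hi = ord0) //; exact: val_inj.
case E: (w ord0).
  have := Hb ord0; rewrite ffunE E => /(_ isT) /existsP [y /andP [Py fy]].
  by exists y; split => //; apply: Ew; rewrite fy.
have : ~~ (([ffun j => [forall y, P y ==> f y j]] : cube 1) ord0).
  by apply/negP => /Ha; rewrite E.
rewrite ffunE negb_forall => /existsP [y]; rewrite negb_imply => /andP [Py fy].
by exists y; split => //; apply: Ew; rewrite E (negbTE fy).
Qed.

Lemma chain_small m (x y : cube m) : m <= 1 -> cle x y \/ cle y x.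
Proof.
move=> m1; case H1: (cle x y); first by left.
right; apply/cleP => i yi.
move/negbT: H1 => /cleP H1; apply/negPn/negP => nxi; apply: H1 => j xj.
have : j = i by apply: val_inj; move: (leq_trans (ltn_ord i) m1) (leq_trans (ltn_ord j) m1); rewrite !ltnS !leqn0 => /eqP Ei /eqP Ej; rewrite /= Ei Ej.
by move=> E; move: xj; rewrite E (negbTE nxi).
Qed.

Lemma cjoin_le n (x y : cube n) : cle x y -> cjoin x y = y.
Proof.
move=> /cleP H; apply/ffunP => i; rewrite ffunE.
by case E: (x i) => //=; rewrite (H _ E).
Qed.

Lemma cjoinC n (x y : cube n) : cjoin x y = cjoin y x.
Proof. by apply/ffunP => i; rewrite !ffunE orbC. Qed.

Lemma tauK (x : cube 2) : tau (tau x) = x.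
Proof. by apply/ffunP => i; rewrite !ffunE rev_ordK. Qed.

Lemma cle_tau (x y : cube 2) : cle x y -> cle (tau x) (tau y).
Proof. by move=> /cleP H; apply/cleP => i; rewrite !ffunE; apply: H. Qed.

Lemma DMor_good m n (f : cube m -> cube n) : DMor f -> interval_preserving f /\ join_hom f.
Proof.
elim => {m n f}.
- move=> m n f m1 n1 mf; split; first exact: IP_small.
  move=> x y; case: (chain_small x y m1) => H.
    by rewrite !cjoin_le //; apply: mf.
  by rewrite cjoinC (cjoinC (f x)) !cjoin_le //; apply: mf.
- split.
    move=> x z xz; exists (tau x), (tau z); split; first exact: cle_tau.
    move=> w; split.
      by move=> [y [/andP [H1 H2] <-]]; apply/andP; split; apply: cle_tau.
    move=> /andP [H1 H2]; exists (tau w); split; last exact: tauK.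
    by apply/andP; split; [rewrite -[x]tauK | rewrite -[z]tauK]; apply: cle_tau.
  by move=> x y; apply/ffunP => i; rewrite !ffunE.
- split; first exact: IP_small.
  move=> x y; apply/ffunP => i; rewrite !ffunE.
  by case: (x _); case: (x _); case: (y _); case: (y _).
- move=> n; split; last by [].
  move=> x z xz; exists x, z; split => // w; split; first by move=> [y [? <-]].
  by move=> H; exists w.
- move=> m n p f g _ [If Jf] _ [Ig Jg]; split; first exact: IP_comp.
  by move=> x y; rewrite Jf Jg.
- move=> a b c d f g _ [If Jf] _ [Ig Jg]; split; [exact: IP_prod | exact: JH_prod].
- move=> m n f g _ [If Jf] E; split.
    move=> x z xz; have [a [b [ab H]]] := If x z xz; exists a, b; split => // w.
    split => [[y [Hy Ey]]|Hw]; first by apply/H; exists y; rewrite E. 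
    by have [y [Hy Ey]] := (proj2 (H w) Hw); exists y; rewrite -E.
  by move=> x y; rewrite -!E.
Qed.

Definition xn k (x : cube k) (t : nat) : bool :=
  match insub t with Some o => x o | None => false end.
Lemma xnE k (x : cube k) (o : 'I_k) : x o = xn x o.
Proof. by rewrite /xn valK. Qed.

Lemma xn_ffun k (F : 'I_k -> bool) t :
  xn [ffun o => F o] t = if insub t is Some o then F o else false.
Proof. by rewrite /xn; case: insubP => // o _ _; rewrite ffunE. Qed.

Lemma xn_out k (x : cube k) t : k <= t -> xn x t = false.
Proof. by move=> H; rewrite /xn insubF // ltnNge H. Qed.

Lemma cube_ext k (x y : cube k) : (forall t, t < k -> xn x t = xn y t) -> x = y.
Proof. by move=> H; apply/ffunP => o; rewrite !xnE H. Qed.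

Lemma xn_pair b d (y : cube b) (z : cube d) t :
  xn (cube_pair y z) t = if t < b then xn y t else xn z (t - b).
Proof.
rewrite /xn; case: insubP => [o _ Eo|].
  rewrite ffunE -Eo; case: splitP => [j Ej|k Ek].
    by have E : \val o = val j := Ej; rewrite E valK.
  by have E : \val o = b + val k := Ek; rewrite E addKn valK.
move=> Ht; case: ifP => Htb; first by rewrite (leq_trans Htb (leq_addr d b)) in Ht.
rewrite insubF //; apply/negP => H; move/negP: Ht; apply.
have Hbt : b <= t by rewrite leqNgt Htb.
by rewrite -(subnK Hbt) addnC ltn_add2l.
Qed.

Lemma xn_left a c (x : cube (a + c)) t : xn (cube_left x) t = (t < a) && xn x t.
Proof.
rewrite /xn; case: insubP => [o _ Eo|].
  rewrite ffunE -Eo ltn_ord /=.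
  by have E : \val o = \val (lshift c o) by []; rewrite E valK.
by rewrite -leqNgt leqNgt => /negbTE ->.
Qed.

Lemma xn_right a c (x : cube (a + c)) t : xn (cube_right x) t = xn x (a + t).
Proof.
rewrite /xn; case: insubP => [o _ Eo|].
  rewrite ffunE -Eo.
  by have E : a + \val o = \val (rshift a o) by []; rewrite E valK.
by rewrite -leqNgt => Ht; rewrite insubF // ltn_add2l ltnNge Ht.
Qed.

Lemma xn_tau (y : cube 2) t : xn (tau y) t = (t < 2) && xn y (1 - t).
Proof.
rewrite /tau xn_ffun; case: insubP => [o _ Eo|].
  by rewrite -Eo ltn_ord xnE.
by rewrite -leqNgt leqNgt => /negbTE ->.
Qed.

Lemma xn_gamma (y : cube 2) t : xn (gamma_plus y) t = (t < 1) && (xn y 0 || xn y 1).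
Proof.
rewrite /gamma_plus xn_ffun; case: insubP => [o _ Eo|].
  by rewrite -Eo ltn_ord !xnE.
by rewrite -leqNgt leqNgt => /negbTE ->.
Qed.

Definition OrInto n (j : 'I_n) : cube (1 + n) -> cube n :=
  fun x => [ffun i => cube_right x i || ((i == j) && cube_left x ord0)].

Lemma xn_OrInto n (j : 'I_n) x t :
  xn (OrInto j x) t = (t < n) && (xn x (1 + t) || (t == j) && xn x 0).
Proof.
rewrite /OrInto xn_ffun; case: insubP => [o _ Eo|].
  by rewrite -Eo ltn_ord !xnE xn_left xn_right.
by rewrite -leqNgt leqNgt => /negbTE ->.
Qed.

Lemma DMor_OrInto n (j : 'I_n) : DMor (OrInto j).
Proof.
elim: n j => [|n IH] j; first by case: j.
case: (unliftP ord0 j) => [j' ->|->].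
  apply: (DMor_ext (DMor_comp (DMor_prod DMor_tau (DMor_id n)) (DMor_prod (DMor_id 1) (IH j')))).
  move=> x; apply: cube_ext => t Ht; rewrite /fprod.
  rewrite !(xn_pair, xn_left, xn_right, xn_tau, xn_gamma, xn_OrInto) /=.
  rewrite !(@xn_pair 2 n) !(xn_pair, xn_left, xn_right, xn_tau, xn_gamma, xn_OrInto) /=.
  by case: t Ht => [|[|t]] Ht //=; rewrite orbF.
apply: (DMor_ext (DMor_prod DMor_gamma (DMor_id n))).
move=> x; apply: cube_ext => t Ht; rewrite /fprod.
rewrite !(xn_pair, xn_left, xn_right, xn_tau, xn_gamma, xn_OrInto) /= Ht.
case: t Ht => [|t] Ht //=; first by rewrite orbC.
by rewrite orbF subSS subn0.
Qed.

Lemma ord1_0 (j : 'I_1) : val j = 0.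
Proof. by case: j => -[]. Qed.

Lemma exists_split m (P : 'I_(1 + m) -> bool) :
  [exists i, P i] = P (lshift m ord0) || [exists k, P (rshift 1 k)].
Proof.
apply/existsP/orP => [[i Pi]|[H|/existsP [k Pk]]].
- case: (ord_split i) => [[j E]|[k E]].
    by left; move: Pi; rewrite E (_ : j = ord0) //; apply: val_inj; rewrite /= ord1_0.
  by right; apply/existsP; exists k; rewrite -E.
- by exists (lshift m ord0).
- by exists (rshift 1 k).
Qed.

Definition form m n (s : 'I_m -> option 'I_n) (c : cube n) : cube m -> cube n :=
  fun x => [ffun j => c j || [exists i, (s i == Some j) && x i]].

Lemma mono_const m n (c : cube n) : monotone_cube (fun _ : cube m => c).
Proof. by move=> *; apply: cle_refl. Qed.

Lemma DMor_const n (c : cube n) : DMor (fun _ : cube 0 => c).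
Proof.
elim: n c => [|n IH] c.
  by apply: (DMor_ext (DMor_id 0)) => x; apply: cube_ext.
refine (@DMor_ext 0 n.+1 (fprod (fun _ : cube 0 => cube_left (a:=1) c) (fun _ : cube 0 => cube_right (a:=1) c)) (fun _ => c) _ _).
  exact (DMor_prod (DMor_base (isT : 0 <= 1) (isT : 1 <= 1) (@mono_const 0 1 (cube_left (a:=1) c))) (IH (cube_right (a:=1) c))).
by move=> x; exact: (@pair_lr 1 n c).
Qed.

Lemma DMor_drop m : DMor (@cube_right 1 m).
Proof.
have c0 : cube 0 by exact: [ffun => false].
apply: (DMor_ext (DMor_prod (DMor_base (isT : 1 <= 1) (isT : 0 <= 1) (@mono_const 1 0 c0)) (DMor_id m))).
move=> x; apply: cube_ext => t Ht; rewrite /fprod.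
by rewrite !(xn_pair, xn_right) /= subn0.
Qed.

Lemma DMor_form m : forall n (s : 'I_m -> option 'I_n) (c : cube n), DMor (form s c).
Proof.
elim: m => [|m IH] n s c.
  apply: (DMor_ext (DMor_const c)) => x; apply/ffunP => j; rewrite ffunE.
  by case: existsP => [[[]]|]; rewrite ?orbF.
pose s' := fun i : 'I_m => s (rshift 1 i).
case E: (s (lshift m (ord0 : 'I_1))) => [j0|].
  apply: (DMor_ext (DMor_comp (DMor_prod (DMor_id 1) (IH n s' c)) (DMor_OrInto j0))).
  move=> x; apply/ffunP => j; rewrite /OrInto /fprod ffunE left_pair right_pair.
  rewrite !ffunE exists_split E /=.
  rewrite (_ : [exists i, _] = [exists k, (s (rshift 1 k) == Some j) && x (rshift 1 k)]); last first.
    by apply: eq_existsb => k; rewrite right_rshift.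
  rewrite (_ : (Some j0 == Some j) = (j == j0)); last by rewrite eq_sym.
  by case: (c j); case: [exists _, _]; case: (_ == _); case: (x _).
apply: (DMor_ext (DMor_comp (DMor_drop m) (IH n s' c))).
move=> x; apply/ffunP => j; rewrite !ffunE exists_split E /=.
congr (_ || _); apply: eq_existsb => k; by rewrite right_rshift.
Qed.

Definition zero m : cube m := [ffun _ => false].
Definition unit m (i : 'I_m) : cube m := [ffun k => k == i].

Lemma cle_join n (x y : cube n) : cle x (cjoin x y).
Proof. by apply/cleP => i xi; rewrite ffunE xi. Qed.

Lemma JH_mono m n (f : cube m -> cube n) x y : join_hom f -> cle x y -> cle (f x) (f y).
Proof. by move=> J xy; rewrite -(cjoin_le xy) J cle_join. Qed.

Lemma zero_le m (x : cube m) : cle (zero m) x.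
Proof. by apply/cleP => i; rewrite ffunE. Qed.

Section Char.
Variables (m n : nat) (f : cube m -> cube n).
Hypothesis (If : interval_preserving f) (Jf : join_hom f).

Let c := f (zero m).

Lemma claimA x : f x = [ffun j => c j || [exists i, x i && f (unit i) j]].
Proof.
move: {2}#|[set i | x i]| (leqnn #|[set i | x i]|) => k.
elim: k x => [|k IHk] x Hk.
  have -> : x = zero m.
    apply/ffunP => i; rewrite ffunE; apply/negP => xi.
    by move: Hk; rewrite leqn0 => /eqP /cards0_eq /setP /(_ i); rewrite inE in_set0 xi.
  apply/ffunP => j; rewrite ffunE.
  by case: existsP => [[i]|]; rewrite ?orbF // ffunE.
case: (set_0Vmem [set i | x i]) => [E|[i0]].
  have -> : x = zero m.
    by apply/ffunP => i; rewrite ffunE; apply/negP => xi; move/setP: E => /(_ i); rewrite inE in_set0 xi.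
  apply/ffunP => j; rewrite ffunE.
  by case: existsP => [[i]|]; rewrite ?orbF // ffunE.
rewrite inE => xi0.
pose x' : cube m := [ffun i => x i && (i != i0)].
have Ex : x = cjoin x' (unit i0).
  apply/ffunP => i; rewrite !ffunE; case: (i =P i0) => [->|_]; by rewrite ?xi0 ?andbT ?orbF.
have Hk' : #|[set i | x' i]| <= k.
  have : [set i | x' i] = [set i | x i] :\ i0.
    by apply/setP => i; rewrite !inE ffunE andbC.
  move=> E'; move: Hk; rewrite (cardsD1 i0) inE xi0 -E' add1n ltnS; exact.
rewrite {1}Ex Jf IHk //; apply/ffunP => j; rewrite !ffunE.
apply/idP/idP.
  case/orP => [/orP [->//|/existsP [i /andP [xi fi]]]|fi0]; apply/orP; right; apply/existsP.
    by exists i; move: xi; rewrite ffunE => /andP [xi _]; rewrite xi fi.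
  by exists i0; rewrite xi0 fi0.
case/orP => [->//|/existsP [i /andP [xi fi]]].
case: (i =P i0) => [Ei|/eqP ne]; first by rewrite -Ei fi orbT.
apply/orP; left; apply/orP; right; apply/existsP; exists i.
by rewrite ffunE xi ne fi.
Qed.

Lemma claimB i j k : f (unit i) j -> ~~ c j -> f (unit i) k -> ~~ c k -> j = k.
Proof.
move=> fj cj fk ck; case: (j =P k) => // /eqP ne.
have [a [b [ab H]]] := If (zero_le (unit i)).
have c_le : cle c (f (unit i)) by apply: JH_mono Jf (zero_le _).
pose w : cube n := [ffun t => c t || (t == j)].
have Hc : in_interval a b c.
  by apply/H; exists (zero m); rewrite /in_interval cle_refl zero_le.
have Hu : in_interval a b (f (unit i)).
  by apply/H; exists (unit i); rewrite /in_interval cle_refl zero_le.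
have Hw : in_interval a b w.
  move: Hc Hu => /andP [ac _] /andP [_ ub]; apply/andP; split.
    by apply: cle_trans ac _; apply/cleP => t ct; rewrite ffunE ct.
  apply: cle_trans ub; apply/cleP => t; rewrite ffunE => /orP [ct|/eqP ->//].
  by move/cleP: c_le; apply.
have [y [/andP [_ Hy] Ey]] := proj2 (H w) Hw.
case E: (y i).
  have Eu : y = unit i.
    apply/ffunP => t; rewrite ffunE; case: (t =P i) => [->//|/eqP ti].
    by apply/negP => yt; move/cleP: Hy => /(_ t yt); rewrite ffunE (negbTE ti).
  by move: Ey fk; rewrite Eu => ->; rewrite ffunE (negbTE ck) eq_sym (negbTE ne).
have Ez : y = zero m.
  apply/ffunP => t; rewrite ffunE; apply/negP => yt.
  by move/cleP: Hy => /(_ t yt); rewrite ffunE => /eqP Et; rewrite -Et yt in E.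
by move: Ey cj; rewrite Ez -/c => ->; rewrite ffunE eqxx orbT.
Qed.

Definition sig_of i := [pick j | f (unit i) j && ~~ c j].

Lemma char_DMor : DMor f.
Proof.
apply: (DMor_ext (DMor_form sig_of c)) => x.
rewrite (claimA x); apply/ffunP => j; rewrite !ffunE.
case cj: (c j) => //=; apply: eq_existsb => i.
rewrite andbC; congr (_ && _); rewrite /sig_of; case: pickP => [j0 /andP [H1 H2]|H] /=.
  apply/idP/idP => [/eqP [<-]//|fj]; by rewrite (claimB H1 H2 fj (negbT cj)).
by move: (H j); rewrite /= cj andbT => ->.
Qed.

End Char.

Theorem mainTheorem4 (m n : nat) (phi : cube m -> cube n) :
  DMor phi <-> (interval_preserving phi /\ join_hom phi).
Proof.
split; first exact: DMor_good.
by move=> [I J]; apply: char_DMor.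
Qed.
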